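(* Let $G$ be a finite $2$-group. Then $G$ is a $2$-closed group if and only if $G$ is cyclic or $G$ is a generalized quaternion group $Q_{2^n}$ for some $n\geq 3$.
   Context: Permutations act on the right. For $X\leq{\rm Sym}(\Omega)$, the $2$-closure of $X$ on $\Omega$ is $X^{(2),\Omega}=\{\theta\in{\rm Sym}(\Omega)\mid \forall \alpha,\beta\in\Omega\ \exists g\in X:\ \alpha^\theta=\alpha^g,\ \beta^\theta=\beta^g\}$. An abstract group $G$ is called a $2$-closed group if $H=H^{(2),\Omega}$ for every set $\Omega$ and every subgroup $H\leq{\rm Sym}(\Omega)$ with $H\cong G$. $Q_{2^n}$ denotes the generalized quaternion group of order $2^n$. *)

(* Defs.v *)
From mathcomp Require Import all_boot all_fingroup all_solvable.
Set Implicit Arguments. Unset Strict Implicit. Unset Printing Implicit Defensive.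
Local Open Scope group_scope.

(* A subgroup H <= Sym(Omega) isomorphic to G is represented as the image of a
   faithful (injective) permutation representation rho of G on Omega.
   Permutations act on the right: a^(xy) = (a^x)^y, i.e. rho (x*y) = rho y \o rho x. *)
Definition faithful_perm_rep (gT : finGroupType) (G : {set gT})
    (Omega : Type) (rho : gT -> Omega -> Omega) : Prop :=
  [/\ rho 1 = id,
      {in G &, forall x y, rho (x * y) = rho y \o rho x},
      {in G, forall x, bijective (rho x)} &
      {in G &, injective rho}].

Definition perm_image (gT : finGroupType) (G : {set gT})
    (Omega : Type) (rho : gT -> Omega -> Omega) : (Omega -> Omega) -> Prop :=
  fun theta => exists2 g, g \in G & theta = rho g.

Definition two_closure (Omega : Type) (X : (Omega -> Omega) -> Prop)
    : (Omega -> Omega) -> Prop :=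
  fun theta => bijective theta /\
    forall a b : Omega, exists2 g, X g & theta a = g a /\ theta b = g b.

Definition two_closed_group (gT : finGroupType) (G : {set gT}) : Prop :=
  forall (Omega : Type) (rho : gT -> Omega -> Omega),
    faithful_perm_rep G rho ->
    forall theta : Omega -> Omega,
      two_closure (perm_image G rho) theta <-> perm_image G rho theta.

(* Main.v *)
Require Import Defs.
From mathcomp Require Import all_boot all_fingroup all_solvable.
From Stdlib Require Import FunctionalExtensionality Classical.
Set Implicit Arguments. Unset Strict Implicit. Unset Printing Implicit Defensive.
Local Open Scope group_scope.

Lemma inlI (A B : Type) (a b : A) : @inl A B a = inl b -> a = b.
Proof. by case. Qed.
Lemma inrI (A B : Type) (a b : B) : @inr A B a = inr b -> a = b.
Proof. by case. Qed.

Section Cos.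
Variables (gT : finGroupType) (G K : {group gT}).

Definition cosT := {A : {set gT} | A \in rcosets K G}.
Definition cact (g : gT) (A : cosT) : cosT := insubd A (val A :* g).

Lemma cosP (A : cosT) : exists2 x, x \in G & val A = K :* x.
Proof. by case: A => /= A /rcosetsP. Qed.

Lemma cact_val g (A : cosT) : g \in G -> val (cact g A) = val A :* g.
Proof.
move=> Gg; rewrite /cact insubdK //; have [x Gx ->] := cosP A.
by rewrite -rcosetM; apply/rcosetsP; exists (x * g); rewrite ?groupM.
Qed.

Lemma cact1 : cact 1 = id.
Proof. by apply: functional_extensionality => A; apply: val_inj; rewrite cact_val ?rcoset1. Qed.

Lemma cactM x y : x \in G -> y \in G -> cact (x * y) = cact y \o cact x.
Proof.
move=> Gx Gy; apply: functional_extensionality => A; apply: val_inj.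
by rewrite /= !cact_val ?groupM // rcosetM.
Qed.

Lemma cact_bij x : x \in G -> bijective (cact x).
Proof.
move=> Gx; exists (cact x^-1) => A; apply: val_inj;
  by rewrite !cact_val ?groupV // ?rcosetK ?rcosetKV.
Qed.

Lemma ptP x : x \in G -> K :* x \in rcosets K G.
Proof. by move=> Gx; apply/rcosetsP; exists x. Qed.

Definition pt x (Gx : x \in G) : cosT := exist (fun A => A \in rcosets K G) (K :* x) (ptP Gx).

Lemma cact_pt x g (Gx : x \in G) (Gg : g \in G) :
  cact g (pt Gx) = pt (groupM Gx Gg).
Proof. by apply: val_inj; rewrite cact_val //= rcosetM. Qed.

Lemma pt_eq x y (Gx : x \in G) (Gy : y \in G) :
  (pt Gx = pt Gy) <-> x * y^-1 \in K.
Proof.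
split=> [/(congr1 val) /= E | Kxy].
  by rewrite -mem_rcoset -E rcoset_refl.
by apply: val_inj => /=; apply/rcoset_eqP; rewrite mem_rcoset.
Qed.

Lemma pt_eqL x y (Gx : x \in G) (Gy : y \in G) :
  pt Gx = pt Gy -> x * y^-1 \in K.
Proof. by move/pt_eq. Qed.

Lemma cact_central x w w' (Gx : x \in G) (Gw : w \in G) (Gw' : w' \in G) :
  commute x (w * w'^-1) -> w * w'^-1 \in K -> cact w (pt Gx) = cact w' (pt Gx).
Proof.
move=> cx Kw; rewrite !cact_pt; apply/pt_eq.
by rewrite invMg mulgA -(mulgA x w) cx mulgK.
Qed.

Lemma pt_all (A : cosT) : exists x, exists Gx : x \in G, A = pt Gx.
Proof. have [x Gx E] := cosP A; exists x, Gx; exact: val_inj. Qed.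

Lemma cactK x : x \in G -> cancel (cact x) (cact x^-1).
Proof.
move=> Gx A; apply: val_inj; rewrite !cact_val ?groupV //; last first.
by rewrite rcosetK.
Qed.

Lemma cactKV x : x \in G -> cancel (cact x^-1) (cact x).
Proof.
move=> Gx A; apply: val_inj; rewrite !cact_val ?groupV //; last first.
by rewrite rcosetKV.
Qed.

End Cos.


Lemma inv_cycle (gT : finGroupType) (u x : gT) :
  u ^+ 2 = 1 -> x \in <[u]> -> x = 1 \/ x = u.
Proof.
move=> u2 /cycleP[i ->]; rewrite -(expg_mod i u2).
have : i %% 2 < 2 by rewrite ltn_mod.
by case: (i %% 2) => [|[|//]] _; [left | right; rewrite expg1].
Qed.

Definition uinv (gT : finGroupType) (G : {set gT}) := forall u v,
  u \in G -> v \in G -> u ^+ 2 = 1 -> v ^+ 2 = 1 -> u != 1 -> v != 1 -> u = v.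

Lemma order2 (gT : finGroupType) (u : gT) : u ^+ 2 = 1 -> u != 1 -> #[u] = 2.
Proof.
move=> u2 nu; have : #[u] %| 2 by rewrite order_dvdn u2.
have : (#[u] != 1)%N by rewrite order_eq1.
case: #[u] => [|[|[|k]]] // _ /(dvdn_leq isT).
Qed.

Lemma uinv_iff (gT : finGroupType) (G : {group gT}) : 2.-group G ->
  (uinv G <-> cyclic G \/ exists2 n : nat, (3 <= n)%N & G \isog 'Q_(2 ^ n)).
Proof.
move=> pG.
have [-> | ntG] := eqVneq G 1%G.
  split=> [_|_]; first by left; exact: cyclic1.
  by move=> u v; rewrite !inE => /eqP -> _ _ _; rewrite eqxx.
have E : (cyclic G \/ exists2 n : nat, (3 <= n)%N & G \isog 'Q_(2 ^ n)) <->
         #|'Ohm_1(G)| = 2.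
  split=> [H | /(prime_Ohm1P pG ntG) /orP[->|/andP[_ /eqP/quaternion_classP H]]].
  - apply/(prime_Ohm1P pG ntG); case: H => [->//|/quaternion_classP ->].
    by rewrite orbT.
  - by left.
  - by right.
apply: (iff_trans _ (iff_sym E)); split=> [U | O2].
  have [_ d2 _] := pgroup_pdiv pG ntG.
  have [z Gz oz] := Cauchy (G := G) (p := 2) isT d2.
  have z2 : z ^+ 2 = 1 by apply/eqP; rewrite -order_dvdn oz.
  have nz : z != 1 by rewrite -order_eq1 oz.
  suff S : [set x in G | prime #[x]] = [set z].
    by rewrite Ohm1Eprime S -/(cycle z) -orderE.
  apply/setP => x; rewrite !inE; apply/andP/eqP => [[Gx px]|->]; last first.
    by rewrite Gz oz.
  have := mem_p_elt pG Gx; rewrite /p_elt (pnatE _ px) inE => /eqP ox.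
  apply: U => //; try by apply/eqP; rewrite -order_dvdn ?ox ?oz.
  by rewrite -order_eq1 ox.
move=> u v Gu Gv u2 v2 nu nv.
have inO w : w \in G -> w ^+ 2 = 1 -> w != 1 -> w \in 'Ohm_1(G).
  move=> Gw w2 nw; rewrite Ohm1Eprime mem_gen // inE Gw.
  by rewrite (order2 w2 nw).
have Ou := inO u Gu u2 nu; have Ov := inO v Gv v2 nv.
have : <[u]> \subset 'Ohm_1(G) by rewrite cycle_subG.
have : #|'Ohm_1(G)| <= #|<[u]>| by rewrite -orderE (order2 u2 nu) O2.
move=> le sub; have /eqP Eq : <[u]> == 'Ohm_1(G) :> {set gT}.
  by rewrite eqEcard sub le.
by rewrite -Eq in Ov; case: (inv_cycle u2 Ov) => // v1; rewrite v1 eqxx in nv.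
Qed.




Lemma closed_of_uinv (gT : finGroupType) (G : {group gT}) :
  2.-group G -> uinv G -> two_closed_group G.
Proof.
move=> pG U Omega rho [r1 rM rB rI] theta; split; last first.
  case=> g Gg ->; split; first exact: rB.
  by move=> a b; exists (rho g) => //; exists g.
case=> bth H.
have [G1 | ntG] := eqVneq G 1%G.
  exists 1; first exact: group1.
  rewrite r1; apply: functional_extensionality => b.
  have [_ [h Gh ->] [_ ->]] := H b b.
  by move: Gh; rewrite G1 inE => /eqP ->; rewrite r1.
have [_ d2 _] := pgroup_pdiv pG ntG.
have [z Gz oz] := Cauchy (G := G) (p := 2) isT d2.
have z2 : z ^+ 2 = 1 by apply/eqP; rewrite -order_dvdn oz.
have nz : z != 1 by rewrite -order_eq1 oz.
have [a za] : exists a, rho z a <> a.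
  apply: NNPP => N; move/eqP: nz; apply; apply: rI => //.
  rewrite r1; apply: functional_extensionality => a.
  by apply: NNPP => N'; apply: N; exists a.
have stab h h' : h \in G -> h' \in G -> rho h a = rho h' a -> h = h'.
  move=> Gh Gh' E; set k := h * h'^-1.
  have Gk : k \in G by rewrite groupM ?groupV.
  have ka : rho k a = a.
    rewrite /k rM ?groupV //= E.
    have := congr1 (fun f => f a) (rM h' h'^-1 Gh' (groupVr Gh')).
    by rewrite mulgV r1 /= => <-.
  have kna n : rho (k ^+ n) a = a.
    elim: n => [|n IH]; first by rewrite expg0 r1.
    by rewrite expgSr rM ?groupX //= IH.
  apply: divg1_eq; apply/eqP; apply: contraT => nk.
  have [e oe] := p_natP (mem_p_elt pG Gk).
  case: e oe => [|e] oe; first by move/eqP: oe; rewrite order_eq1 (negPf nk).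
  have dv : 2 ^ e %| #[k] by rewrite oe dvdn_exp2l.
  have ow : #[k ^+ (2 ^ e)] = 2.
    by rewrite (orderXdiv dv) oe expnS mulnK // expn_gt0.
  have Ew : k ^+ (2 ^ e) = z.
    apply: U; rewrite ?groupX //.
    - by apply/eqP; rewrite -order_dvdn ow.
    - by rewrite -order_eq1 ow.
  by case: za; rewrite -Ew kna.
have [_ [h0 Gh0 ->] [E0 _]] := H a a.
exists h0 => //; apply: functional_extensionality => b.
have [_ [h Gh ->] [Ea Eb]] := H a b.
by rewrite Eb (stab h h0) // -Ea E0.
Qed.
Section ConsB.
Variables (gT : finGroupType) (G : {group gT}) (b x0 : gT).
Hypotheses (nilG : nilpotent G) (Gb : b \in G) (b2 : b ^+ 2 = 1) (nb : b != 1)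
  (Gx0 : x0 \in G) (ncx0 : ~ commute x0 b).

Let N := <<b ^: G>>%G.
Let B := [~: N, G]%G.
Let K := <[b]>%G.

Lemma binv : b^-1 = b.
Proof. by apply: (mulgI b); rewrite mulgV -expg2 b2. Qed.

Lemma nBG : G \subset 'N(B).
Proof. exact: commg_normr. Qed.

Lemma bnotB : b \notin B.
Proof.
apply/negP => bB.
have sNG : N \subset G by rewrite gen_subG class_subG.
have ntN : N != 1%G.
  apply/eqP => N1; move/eqP: nb; apply; apply/set1P.
  by rewrite -[[set 1]]/(gval 1%G) -N1 mem_gen // class_refl.
have nNG : G \subset 'N_G(N).
  by rewrite subsetI subxx (subset_trans (class_norm b G)) // norm_gen.
have := nil_comm_properl nilG sNG ntN nNG.
rewrite properE => /andP[_]; apply/negP/negPn.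
rewrite gen_subG; apply/subsetP => y /imsetP[w Gw ->].
by rewrite memJ_norm // (subsetP nBG).
Qed.

Lemma notclosedB : ~ two_closed_group G.
Proof.
move=> C.
pose Om := (cosT G K + cosT G B)%type.
pose rho (g : gT) (p : Om) : Om :=
  match p with inl A => inl (cact g A) | inr A => inr (cact g A) end.
pose th (p : Om) : Om :=
  match p with inl A => inl (cact b A) | inr A => inr A end.
have r1 : rho 1 = id.
  by apply: functional_extensionality => -[A|A]; rewrite /rho cact1.
have rM : {in G &, forall x y, rho (x * y) = rho y \o rho x}.
  by move=> x y Gx Gy; apply: functional_extensionality => -[A|A];
     rewrite /rho cactM.
have F : faithful_perm_rep G rho.
  split=> //.
  - move=> x Gx; exists (rho x^-1) => -[A|A]; by rewrite /rho ?cactK ?cactKV.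
  - move=> x y Gx Gy E.
    have E1 := congr1 (fun f => f (inl (pt K (group1 G)))) E.
    have E2 := congr1 (fun f => f (inr (pt B (group1 G)))) E.
    move: E1 E2; rewrite /rho !cact_pt /= => E1 E2.
    move: (pt_eqL (inrI E2)) (pt_eqL (inlI E1)); rewrite !mul1g => + K1.
    move: K1.
    move=> /(inv_cycle b2) [/divg1_eq //|xyb xyB].
    by case/negP: bnotB; rewrite -xyb.
have [Bth Imth] := C Om rho F th.
have [g0 Gg0 Eg0] : perm_image G rho th.
  apply: Bth; split.
    by exists th => -[A|A] //=; rewrite -{1}binv cactK.
  move=> p q.
  have key : forall A C : cosT G K * cosT G B, exists2 g, g \in G &
      cact g A.1 = cact b A.1 /\ cact g A.2 = A.2.
    move=> [A1 A2] _ /=.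
    have [x [Gx ->]] := pt_all A1; have [y [Gy ->]] := pt_all A2.
    have Gg : [~ x, b] \in G by rewrite commgEl groupM ?groupV ?groupJ.
    exists [~ x, b] => //.
    rewrite !(cact_pt _ _ Gg) (cact_pt _ _ Gb); split; apply/pt_eq.
      rewrite commgEl mulKVg conjgE invMg mulgA [b^-1 * (x * b)]mulgA !mulgK.
      by rewrite groupV cycle_id.
    rewrite -mulgA -{1}(invgK y) -conjgE memJ_norm ?(subsetP nBG) ?groupV //.
    by rewrite /B /N /= commGC mem_commg // mem_gen // class_refl.
  case: p q => [A|A] [A'|A'].
  - by exists (rho b); [exists b | split].
  - have [g Gg [E1 E2]] := key (A, A') (A, A').
    by exists (rho g); [exists g | rewrite /rho /= E1 E2].
  - have [g Gg [E1 E2]] := key (A', A) (A', A).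
    by exists (rho g); [exists g | rewrite /rho /= E1 E2].
  - by exists (rho 1); [exists 1 | rewrite r1].
have E2 := congr1 (fun f => f (inr (pt B (group1 G)))) Eg0.
have E1 := congr1 (fun f => f (inl (pt K (group1 G)))) Eg0.
move: E1 E2; rewrite /th /rho !cact_pt /= => E1 E2.
move: (pt_eqL (inrI E2)) (pt_eqL (inlI E1)); rewrite !mul1g => + Kb.
rewrite groupV => Bg0.
have : g0 \in K by rewrite -groupV -(groupMl _ (cycle_id b)).
case/(inv_cycle b2) => g0E; last by case/negP: bnotB; rewrite -g0E.
subst g0.
have E3 := congr1 (fun f => f (inl (pt K Gx0))) Eg0.
move: E3; rewrite /th /rho !cact_pt /= => E3; move: (pt_eqL (inlI E3)).
rewrite mulg1.
case/(inv_cycle b2) => E.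
  case/negP: nb; rewrite -(conjg_eq1 b x0^-1) conjgE invgK mulgA E //.
apply: ncx0; rewrite /commute.
by rewrite -{2}E mulgKV.
Qed.
End ConsB.

Section ConsA.
Variables (gT : finGroupType) (G : {group gT}) (a c : gT).
Hypotheses (Ga : a \in G) (Gc : c \in G) (a2 : a ^+ 2 = 1) (c2 : c ^+ 2 = 1)
  (na : a != 1) (nc : c != 1) (nac : a != c)
  (ca : {in G, forall x, commute x a}) (cc : {in G, forall x, commute x c}).

Let K1 := <[a]>%G.
Let K2 := <[c]>%G.
Let K3 := <[a * c]>%G.

Lemma ac2 : (a * c) ^+ 2 = 1.
Proof. by rewrite expgMn ?a2 ?c2 ?mulg1 //; apply: cc. Qed.

Lemma ainv : a^-1 = a.
Proof. by apply: (mulgI a); rewrite mulgV -expg2 a2. Qed.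

Lemma notclosedA : ~ two_closed_group G.
Proof.
move=> C.
pose Om := ((cosT G K1 + cosT G K2) + cosT G K3)%type.
pose rho (g : gT) (p : Om) : Om :=
  match p with
  | inl (inl A) => inl (inl (cact g A))
  | inl (inr A) => inl (inr (cact g A))
  | inr A => inr (cact g A) end.
pose th (p : Om) : Om :=
  match p with inr A => inr (cact a A) | _ => p end.
have r1 : rho 1 = id.
  by apply: functional_extensionality => -[[A|A]|A]; rewrite /rho cact1.
have rM : {in G &, forall x y, rho (x * y) = rho y \o rho x}.
  by move=> x y Gx Gy; apply: functional_extensionality => -[[A|A]|A];
     rewrite /rho cactM.
have Ga' : a * c \in G by rewrite groupM.
have F : faithful_perm_rep G rho.
  split=> //.
  - move=> x Gx; exists (rho x^-1) => -[[A|A]|A]; by rewrite /rho ?cactK ?cactKV.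
  - move=> x y Gx Gy E.
    have E1 := congr1 (fun f => f (inl (inl (pt K1 (group1 G))))) E.
    have E2 := congr1 (fun f => f (inl (inr (pt K2 (group1 G))))) E.
    move: E1 E2; rewrite /rho !cact_pt /= => E1 E2.
    move: (pt_eqL (inrI (inlI E2))) (pt_eqL (inlI (inlI E1))); rewrite !mul1g.
    move=> /(inv_cycle c2) [/divg1_eq //|xyc]; rewrite xyc.
    case/(inv_cycle a2) => E'; first by move: nc; rewrite E' eqxx.
    by move: nac; rewrite E' eqxx.
have [Bth Imth] := C Om rho F th.
have [g0 Gg0 Eg0] : perm_image G rho th.
  apply: Bth; split.
    by exists th => -[[A|A]|A] //=; rewrite -{1}ainv cactK.
  have fixa (A : cosT G K1) : cact a A = A.
    have [x [Gx ->]] := pt_all A; rewrite (cact_central _ Ga (group1 G)).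
      by rewrite cact1.
    by rewrite invg1 mulg1; apply: ca.
    by rewrite invg1 mulg1 cycle_id.
  have fixc (A : cosT G K2) : cact c A = A.
    have [x [Gx ->]] := pt_all A; rewrite (cact_central _ Gc (group1 G)).
      by rewrite cact1.
    by rewrite invg1 mulg1; apply: cc.
    by rewrite invg1 mulg1 cycle_id.
  have ca3 (A : cosT G K3) : cact c A = cact a A.
    have [x [Gx ->]] := pt_all A; rewrite (cact_central _ Gc Ga) //.
      by rewrite ainv; apply: commuteM; [apply: cc | apply: ca].
    by rewrite ainv (ca Gc) cycle_id.
  move=> [[A|A]|A] [[A'|A']|A'].
  - by exists (rho 1); [exists 1 | rewrite r1].
  - by exists (rho 1); [exists 1 | rewrite r1].
  - by exists (rho a); [exists a | rewrite /rho /= fixa].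
  - by exists (rho 1); [exists 1 | rewrite r1].
  - by exists (rho 1); [exists 1 | rewrite r1].
  - by exists (rho c); [exists c | rewrite /rho /= fixc ca3].
  - by exists (rho a); [exists a | rewrite /rho /= fixa].
  - by exists (rho c); [exists c | rewrite /rho /= fixc ca3].
  - by exists (rho a); [exists a | ].
have E1 := congr1 (fun f => f (inl (inl (pt K1 (group1 G))))) Eg0.
have E2 := congr1 (fun f => f (inl (inr (pt K2 (group1 G))))) Eg0.
move: E1 E2; rewrite /th /rho !cact_pt /= => E1 E2.
move: (pt_eqL (inrI (inlI E2))) (pt_eqL (inlI (inlI E1))).
rewrite !mul1g !groupV.
move=> /(inv_cycle c2) [g01|g0c]; last first.
  subst g0; case/(inv_cycle a2) => E'; first by move: nc; rewrite E' eqxx.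
  by move: nac; rewrite E' eqxx.
subst g0 => _.
have E3 := congr1 (fun f => f (inr (pt K3 (group1 G)))) Eg0.
move: E3; rewrite /th /rho !cact_pt /= => E3; move: (pt_eqL (inrI E3)).
rewrite !mul1g invg1 mulg1; case/(inv_cycle ac2) => E.
  by move: na; rewrite E eqxx.
by move/eqP: nc; apply; apply: (mulgI a); rewrite mulg1.
Qed.
End ConsA.

Theorem mainTheorem11 (gT : finGroupType) (G : {group gT}) :
  2.-group G ->
  (two_closed_group G <->
   cyclic G \/ exists2 n : nat, (3 <= n)%N & G \isog 'Q_(2 ^ n)).
Proof.
move=> pG; apply: (iff_trans _ (uinv_iff pG)); split; last exact: closed_of_uinv.
move=> C u v Gu Gv u2 v2 nu nv; apply: NNPP => nuv.
have nilG := pgroup_nil pG.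
have [su|] := boolP (G \subset 'C[u]); last first.
  case/subsetPn => x0 Gx0 nx; apply: (notclosedB nilG Gu u2 nu Gx0 _ C).
  by move/cent1P; apply/negP.
have [sv|] := boolP (G \subset 'C[v]); last first.
  case/subsetPn => x0 Gx0 nx; apply: (notclosedB nilG Gv v2 nv Gx0 _ C).
  by move/cent1P; apply/negP.
apply: (notclosedA Gu Gv u2 v2 nu nv _ _ _ C).
- by apply/eqP.
- by move=> x Gx; apply/cent1P; apply: (subsetP su).
- by move=> x Gx; apply/cent1P; apply: (subsetP sv).
Qed.
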